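(* Let $n,q$ be positive integers and $f_{n,q}:\mathbb{C}^3\to\mathbb{C}$, $f_{n,q}(x,y,z)=x-3x^{2n+1}y^{2q}+2x^{3n+1}y^{3q}+yz$. Then $f_{n,q}$ satisfies Malgrange's condition for every $t_0\in\mathbb{C}$ if and only if $n\le q$.
   Context: For a polynomial $g:\mathbb{C}^m\to\mathbb{C}$, let $\operatorname{grad} g(x)=\left(\overline{\frac{\partial g}{\partial x_1}(x)},\dots,\overline{\frac{\partial g}{\partial x_m}(x)}\right)$. The polynomial $g$ satisfies Malgrange's condition for $t_0\in\mathbb{C}$ if there is no sequence $(z^k)\subseteq\mathbb{C}^m$ with $\|z^k\|\to\infty$, $g(z^k)\to t_0$ and $\|z^k\|\cdot\|\operatorname{grad} g(z^k)\|\to 0$ (equivalently: there exist $R>0$, $\eta>0$, $\delta>0$ such that $\|x\|\cdot\|\operatorname{grad} g(x)\|\ge\delta$ whenever $\|x\|\ge R$ and $|g(x)-t_0|<\eta$). *)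

(* Defs.v *)
From mathcomp Require Import all_boot all_order all_algebra reals.
From mathcomp.real_closed Require Import complex.

Set Implicit Arguments.
Unset Strict Implicit.
Unset Printing Implicit Defensive.
Import Order.TTheory GRing.Theory Num.Theory.
Local Open Scope ring_scope.

Section Malgrange.
Variable R : realType.
Local Notation C := (R[i]).

Definition cabs (z : C) : R := ComplexField.Normc.normc z.

Definition vnorm (m : nat) (v : 'rV[C]_m) : R :=
  Num.sqrt (\sum_(i < m) cabs (v 0 i) ^+ 2).

Definition is_partial (m : nat) (g : 'rV[C]_m -> C) (i : 'I_m)
    (x : 'rV[C]_m) (d : C) : Prop :=
  forall eps : R, 0 < eps -> exists del : R, 0 < del /\
    forall h : C, 0 < cabs h -> cabs h < del ->
      cabs ((g (x + h *: delta_mx 0 i) - g x) / h - d) < eps.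

Definition grad_of (m : nat) (D : 'rV[C]_m) : 'rV[C]_m := map_mx (@conjc R) D.

(* Malgrange's condition for t0 (in the equivalent R, eta, delta form) *)
Definition Malgrange (m : nat) (g : 'rV[C]_m -> C) (t0 : C) : Prop :=
  exists (Rr eta delta : R), [/\ 0 < Rr, 0 < eta & 0 < delta] /\
    forall x : 'rV[C]_m, Rr <= vnorm x -> cabs (g x - t0) < eta ->
      forall D : 'rV[C]_m, (forall i, is_partial g i x (D 0 i)) ->
        delta <= vnorm x * vnorm (grad_of D).

Definition f_nq (n q : nat) (v : 'rV[C]_3) : C :=
  let x := v 0 0 in let y := v 0 1 in let z := v 0 2 in
  x - 3 * x ^+ (2 * n + 1) * y ^+ (2 * q)
    + 2 * x ^+ (3 * n + 1) * y ^+ (3 * q) + y * z.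

End Malgrange.

(* Main.v *)
Require Import Defs.
From mathcomp Require Import all_boot all_order all_algebra reals.
From mathcomp.real_closed Require Import complex.
From mathcomp Require Import ring lra.
Set Implicit Arguments.
Unset Strict Implicit.
Unset Printing Implicit Defensive.
Import Order.TTheory GRing.Theory Num.Theory.
Local Open Scope ring_scope.

Module Helpers.
Local Open Scope complex_scope.
Section Aux.
Variable R : realType.
Local Notation C := (R[i]).

Lemma normCE (z : C) : `|z| = (cabs z)%:C.
Proof. by case: z => a b; rewrite normc_def. Qed.

Lemma take1 (q : {poly C}) : take_poly 1 q = (q`_0)%:P.
Proof. by apply/polyP => i; rewrite coef_take_poly coefC; case: i. Qed.

Lemma hdec (q : {poly C}) h : q.[h] = q`_0 + (drop_poly 1 q).[h] * h.
Proof.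
by rewrite -{1}(poly_take_drop 1 q) take1 hornerD hornerM hornerC horner_exp hornerX expr1.
Qed.

Lemma horner_bound (r : {poly C}) (h : C) : `|h| <= 1 ->
  `|r.[h]| <= \sum_(i < size r) `|r`_i|.
Proof.
move=> h1; rewrite horner_coef; apply: le_trans (ler_norm_sum _ _ _) _.
apply: ler_sum => i _; rewrite normrM normrX.
by apply: ler_piMr => //; apply: exprn_ile1.
Qed.

Lemma poly_lim (p : {poly C}) (a e : C) : 0 < e -> exists2 d : C, 0 < d &
  forall h : C, h != 0 -> `|h| < d -> `|(p.[a+h] - p.[a])/h - p^`().[a]| < e.
Proof.
move=> e0.
set t := p \Po ('X + a%:P).
have tE h : t.[h] = p.[a + h] by rewrite horner_comp !hornerE addrC.
set s := drop_poly 1 t; set r := drop_poly 1 s.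
have s0 : s`_0 = p^`().[a].
  rewrite coef_drop_poly add0n.
  have -> : t`_1 = (t^`())`_0 by rewrite coef_deriv mulr1n.
  rewrite -horner_coef0 deriv_comp hornerM horner_comp derivD derivX derivC addr0.
  by rewrite !hornerE.
set M := \sum_(i < size r) `|r`_i|.
have M0 : 0 <= M by apply: sumr_ge0 => i _.
have Me : 0 < M + 1 + e by rewrite addr_gt0 // ltr_pwDr.
exists (e / (M + 1 + e)); first by rewrite divr_gt0.
move=> h h0 hd.
have key : (p.[a+h] - p.[a])/h - p^`().[a] = r.[h] * h.
  have ta : p.[a] = t.[0] by rewrite tE addr0.
  have e1 := hdec t h; have e2 := hdec s h; have e3 := hdec t 0.
  rewrite mulr0 addr0 in e3.
  rewrite -tE ta e3 e1 -/s e2 -/r s0.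
  by field.
rewrite key normrM.
have X0 : 0 <= `|h| by [].
have hX : `|h| * (M + 1 + e) < e by rewrite -ltr_pdivlMr.
have h1 : `|h| <= 1.
  have : `|h| * e < 1 * e.
    rewrite mul1r; apply: le_lt_trans hX; rewrite ler_wpM2l //.
    by rewrite lerDr addr_ge0.
  by rewrite ltr_pM2r // => /ltW.
apply: le_lt_trans (ler_wpM2r X0 (horner_bound r h1)) _.
rewrite mulrC; apply: le_lt_trans hX; rewrite ler_wpM2l //.
by rewrite -addrA lerDl addr_ge0 // ltW.
Qed.


Lemma cabs_ge0 (z : C) : 0 <= cabs z.
Proof. by rewrite -lecR raddf0 -normCE. Qed.

Lemma cabsD (a b : C) : cabs (a + b) <= cabs a + cabs b.
Proof. by rewrite -lecR rmorphD /= -!normCE ler_normD. Qed.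

Lemma cabsN (a : C) : cabs (- a) = cabs a.
Proof. by apply: complexI; rewrite -!normCE normrN. Qed.

Lemma cabsM (a b : C) : cabs (a * b) = cabs a * cabs b.
Proof. by apply: complexI; rewrite rmorphM /= -!normCE normrM. Qed.

Lemma cabsX (a : C) k : cabs (a ^+ k) = cabs a ^+ k.
Proof. by apply: complexI; rewrite rmorphXn /= -!normCE normrX. Qed.

Lemma cabsV (a : C) : cabs (a ^-1) = (cabs a)^-1.
Proof. exact: Normc.normcV. Qed.

Lemma cabs_real (r : R) : cabs (r%:C) = `|r|.
Proof. by rewrite /cabs /= expr0n /= addr0 sqrtr_sqr. Qed.

Lemma cabs_gt0 (z : C) : (0 < cabs z) = (z != 0).
Proof. by rewrite -ltcR raddf0 -normCE normr_gt0. Qed.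

Lemma cabs_conj (z : C) : cabs (z^*)%C = cabs z.
Proof. by case: z => a b; rewrite /cabs /= sqrrN. Qed.

Lemma is_partial_poly m (g : 'rV[C]_m -> C) (i : 'I_m) x (p : {poly C}) :
  (forall h, g (x + h *: delta_mx 0 i) = p.[x 0 i + h]) ->
  is_partial g i x (p^`().[x 0 i]).
Proof.
move=> H eps eps0.
have gx : g x = p.[x 0 i] by rewrite -[x in LHS]addr0 -(scale0r (delta_mx 0 i)) H addr0.
have e0 : 0 < eps%:C by rewrite ltcR.
have [d d0 Hd] := poly_lim p (x 0 i) e0.
move: d0; rewrite ltcE /= => /andP [/eqP dI dR].
exists (complex.Re d); split => // h h0 hd.
rewrite -ltcR -normCE H gx; apply: Hd; first by rewrite -cabs_gt0.
have -> : d = (complex.Re d)%:C by move: dI; case: (d) => a b /= ->.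
by rewrite normCE ltcR.
Qed.

Lemma is_partial_uniq m (g : 'rV[C]_m -> C) (i : 'I_m) x d1 d2 :
  is_partial g i x d1 -> is_partial g i x d2 -> d1 = d2.
Proof.
move=> H1 H2; have [/eqP|ne] := eqVneq (d1 - d2) 0; first by rewrite subr_eq0 => /eqP.
exfalso.
have c0 : 0 < cabs (d1 - d2) by rewrite cabs_gt0 ne.
have e0 : 0 < cabs (d1 - d2) / 2 by rewrite divr_gt0.
have [del1 [p1 Q1]] := H1 _ e0; have [del2 [p2 Q2]] := H2 _ e0.
set k := Num.min del1 del2 / 2.
have k0 : 0 < k by rewrite divr_gt0 // lt_min p1 p2.
have kl1 : k < del1.
  rewrite /k ltr_pdivrMr // (@le_lt_trans _ _ del1) ?ge_min ?lexx //.
  by rewrite ltr_pMr // ltr1n.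
have kl2 : k < del2.
  rewrite /k ltr_pdivrMr // (@le_lt_trans _ _ del2) ?ge_min ?lexx ?orbT //.
  by rewrite ltr_pMr // ltr1n.
have hk : cabs (k%:C) = k by rewrite cabs_real gtr0_norm.
have := Q1 (k%:C); rewrite hk => /(_ k0 kl1) A1.
have := Q2 (k%:C); rewrite hk => /(_ k0 kl2) A2.
set Q := (g _ - g x) / _ in A1 A2.
have : cabs (d1 - d2) <= cabs (Q - d2) + cabs (Q - d1).
  have -> : d1 - d2 = (Q - d2) + - (Q - d1) by ring.
  by apply: le_trans (cabsD _ _) _; rewrite cabsN.
lra.
Qed.

Lemma sum3 (F : 'I_3 -> R) : \sum_(i < 3) F i = F 0 + F 1 + F 2.
Proof. by rewrite !big_ord_recl big_ord0 addr0 addrA; congr (F _ + F _ + F _); apply/val_inj. Qed.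

Lemma vnorm_ge m (v : 'rV[C]_m) i : cabs (v 0 i) <= vnorm v.
Proof.
rewrite /vnorm -(ger0_norm (cabs_ge0 (v 0 i))) -sqrtr_sqr ler_sqrt.
  rewrite (bigD1 i) //= lerDl; apply: sumr_ge0 => j _; exact: sqr_ge0.
by apply: sumr_ge0 => j _; exact: sqr_ge0.
Qed.

Lemma vnorm3_le (v : 'rV[C]_3) :
  vnorm v <= cabs (v 0 0) + cabs (v 0 1) + cabs (v 0 2).
Proof.
have := cabs_ge0 (v 0 0); have := cabs_ge0 (v 0 1); have := cabs_ge0 (v 0 2).
move=> a b c.
rewrite /vnorm sum3 -(@ger0_norm _ (cabs (v 0 0) + _ + _)); last lra.
rewrite -sqrtr_sqr ler_sqrt; first nra.
exact: sqr_ge0.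
Qed.

End Aux.

Section F.
Variable R : realType.
Local Notation C := (R[i]).
Variables n q : nat.

Lemma entry (v : 'rV[C]_3) h i j :
  (v + h *: delta_mx 0 i) 0 j = v 0 j + (if j == i then h else 0).
Proof. by rewrite !mxE eqxx /=; case: (j == i); rewrite ?mulr1 ?mulr0. Qed.

Definition p0 (y z : C) : {poly C} :=
  'X - 3%:P * 'X^(2*n+1) * (y^+(2*q))%:P + 2%:P * 'X^(3*n+1) * (y^+(3*q))%:P + (y*z)%:P.

Lemma p0E (v : 'rV[C]_3) h :
  f_nq n q (v + h *: delta_mx 0 0) = (p0 (v 0 1) (v 0 2)).[v 0 0 + h].
Proof. by rewrite /f_nq /p0 !entry /= !addr0 !hornerE. Qed.

Lemma p0D (x y z : C) : (p0 y z)^`().[x] =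
  1 - 3 * (2*n+1)%:R * (x^+n * y^+q)^+2 + 2 * (3*n+1)%:R * (x^+n*y^+q)^+3.
Proof.
rewrite /p0 !derivE !(hornerD, hornerN, hornerM, hornerC, hornerMn, horner_exp, hornerX).
rewrite !mulr0 !addr0 !addn1 /= !exprMn (mulnC 2 n) (mulnC 3 n) (mulnC 2 q) (mulnC 3 q) !exprM.
ring.
Qed.

Definition p1 (x z : C) : {poly C} :=
  x%:P - (3 * x^+(2*n+1))%:P * 'X^(2*q) + (2 * x^+(3*n+1))%:P * 'X^(3*q) + 'X * z%:P.

Lemma p1E (v : 'rV[C]_3) h :
  f_nq n q (v + h *: delta_mx 0 1) = (p1 (v 0 0) (v 0 2)).[v 0 1 + h].
Proof. by rewrite /f_nq /p1 !entry /= !addr0 !hornerE. Qed.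

Definition p2 (x y : C) : {poly C} :=
  (x - 3 * x^+(2*n+1) * y^+(2*q) + 2 * x^+(3*n+1) * y^+(3*q))%:P + y%:P * 'X.

Lemma p2E (v : 'rV[C]_3) h :
  f_nq n q (v + h *: delta_mx 0 2) = (p2 (v 0 0) (v 0 1)).[v 0 2 + h].
Proof. by rewrite /f_nq /p2 !entry /= !addr0 !hornerE. Qed.

Lemma p2D (x y z : C) : (p2 x y)^`().[z] = y.
Proof. by rewrite /p2 !derivE !hornerE. Qed.

Lemma p1D (x y z : C) : (0 < q)%N -> x^+n * y^+q = 1 -> y != 0 ->
  (p1 x z)^`().[y] = z.
Proof.
move=> q0 hu y0.
rewrite /p1 !derivE !(hornerD, hornerN, hornerM, hornerC, hornerMn, horner_exp, hornerX).
apply: (mulIf y0).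
have e2 : y^+((2*q).-1) * y = (y^+q)^+2.
  by rewrite -exprSr prednK ?muln_gt0 // -exprM mulnC.
have e3 : y^+((3*q).-1) * y = (y^+q)^+3.
  by rewrite -exprSr prednK ?muln_gt0 // -exprM mulnC.
transitivity (- 3 * x^+(2*n+1) * ((y^+((2*q).-1) * y) *+ (2*q)) +
   2 * x^+(3*n+1) * ((y^+((3*q).-1) * y) *+ (3*q)) + z * y); first by ring.
rewrite e2 e3 !exprD !expr1 !expr0 !mulr1.
have Y0 : y^+q != 0 by rewrite expf_neq0.
have -> : x^+n = (y^+q)^-1 by apply: (mulIf Y0); rewrite hu mulVf.
move: Y0; set Y := y^+q => Y0.
by field.
Qed.
End F.

Section M.
Variable R : realType.
Local Notation C := (R[i]).

Lemma cabs_nat k : cabs (k%:R : C) = k%:R.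
Proof. by rewrite -(rmorph_nat (real_complex R)) cabs_real ger0_norm. Qed.

Lemma ord3 (i : 'I_3) : i = 0 \/ i = 1 \/ i = 2.
Proof.
case: i => [[|[|[|k]]] Hi]; [left|right;left|right;right|by []]; exact/val_inj.
Qed.

Lemma pow_le_self (r : R) k : (0 < k)%N -> 0 <= r -> r <= 1 -> r ^+ k <= r.
Proof. by move=> k0 r0 r1; apply: ler_iXnr. Qed.

Lemma forward (n q : nat) : (0 < n)%N -> (0 < q)%N -> (q < n)%N ->
  ~ Malgrange (@f_nq R n q) 0.
Proof.
move=> n0 q0 qn [Rr [eta [delta [[R0 e0 d0] HM]]]].
set s : R := Rr + 2 / delta + 1.
have s1 : 1 <= s by rewrite /s lerDr addr_ge0 // ?ltW // divr_gt0.
have s0 : 0 < s by lra.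
set r : R := s^-1.
have r0 : 0 < r by rewrite invr_gt0.
have r1 : r <= 1 by rewrite invr_le1 // unitfE gt_eqF.
have sr : s * r = 1 by rewrite divff // gt_eqF.
set w : C := s%:C.
have w0 : w != 0 by rewrite -cabs_gt0 cabs_real gtr0_norm.
set x : C := w ^+ q.
set y : C := w^-1 ^+ n.
have y0 : y != 0 by rewrite expf_neq0 // invr_eq0.
have hu : x ^+ n * y ^+ q = 1.
  by rewrite /x /y -!exprM exprVn mulnC divff // expf_neq0.
set v : 'rV[C]_3 := \row_(j < 3) (if j == 0 then x else if j == 1 then y else 0).
have vx : v 0 0 = x by rewrite mxE.
have vy : v 0 1 = y by rewrite mxE.
have vz : v 0 2 = 0 by rewrite mxE.
set D : 'rV[C]_3 := \row_(j < 3) (if j == 2 then y else 0).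
have HD : forall i, is_partial (@f_nq R n q) i v (D 0 i).
  move=> i; case: (ord3 i) => [->|[->|->]]; rewrite mxE /=.
  - have := is_partial_poly (@p0E R n q v); rewrite p0D vx vy hu.
    have -> : (1 - 3 * (2 * n + 1)%:R * 1 ^+ 2 + 2 * (3 * n + 1)%:R * 1 ^+ 3 : C) = 0.
      by rewrite !expr1n natrD natrM natrD natrM; ring.
    by [].
  - by have := is_partial_poly (@p1E R n q v); rewrite vx vz p1D // vy.
  - by have := is_partial_poly (@p2E R n q v); rewrite p2D vy.
have cx : cabs x = s ^+ q by rewrite cabsX cabs_real gtr0_norm.
have cy : cabs y = r ^+ n by rewrite cabsX cabsV cabs_real gtr0_norm.
have Nge : Rr <= vnorm v.
  apply: le_trans (vnorm_ge v 0); rewrite vx cx.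
  apply: le_trans (ler_eXnr _ _) => //; rewrite /s; have := divr_gt0 (ltr0n _ 2) d0; lra.
have fv : cabs (f_nq n q v - 0) < eta.
  have -> : f_nq n q v = 0.
    rewrite /f_nq vx vy vz mulr0 addr0 !exprD !expr1.
    rewrite !expr0 !mulr1.
    have Y0 : y^+q != 0 by rewrite expf_neq0.
    have -> : x^+n = (y^+q)^-1 by apply: (mulIf Y0); rewrite hu mulVf.
    move: Y0; set Y := y^+q => Y0.
    by field.
  by rewrite subr0 (_ : cabs 0 = 0) // -(rmorph0 (real_complex R)) cabs_real normr0.
have := HM v Nge fv D HD.
have N1 : vnorm v <= s ^+ q + r ^+ n.
  apply: le_trans (vnorm3_le v) _; rewrite vx vy vz cx cy.
  by rewrite -(rmorph0 (real_complex R)) cabs_real normr0 addr0.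
have G1 : vnorm (grad_of D) <= r ^+ n.
  apply: le_trans (vnorm3_le _) _; rewrite /grad_of !mxE /= !cabs_conj cy.
  by rewrite oppr0 expr0n addr0 sqrtr0 !add0r.
have G0 : 0 <= vnorm (grad_of D) by rewrite /vnorm sqrtr_ge0.
have A1 : s ^+ q * r ^+ n <= r.
  rewrite -(subnKC (ltnW qn)) exprD mulrA -exprMn sr expr1n mul1r.
  by apply: pow_le_self; rewrite ?subn_gt0 // ltW.
have A2 : r ^+ n * r ^+ n <= r.
  rewrite -exprD; apply: pow_le_self => //; [by rewrite addn_gt0 n0 | exact: ltW].
have rd : 2 * r < delta.
  have h2 : delta * (2/delta) = 2 by rewrite mulrC divfK // gt_eqF.
  have hs : 2 < delta * s.
    by rewrite /s !mulrDr h2 mulr1; have := mulr_gt0 d0 R0; lra.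
  have : 2 * r < delta * s * r by rewrite ltr_pM2r.
  by rewrite -mulrA sr mulr1.
have rn0 : 0 <= r ^+ n by rewrite exprn_ge0 // ltW.
have : vnorm v * vnorm (grad_of D) <= (s ^+ q + r ^+ n) * r ^+ n.
  apply: ler_pM => //; rewrite /vnorm sqrtr_ge0 //.
lra.
Qed.

Lemma backward (n q : nat) : (0 < n)%N -> (0 < q)%N -> (n <= q)%N ->
  forall t0, Malgrange (@f_nq R n q) t0.
Proof.
move=> n0 q0 nq t0.
set m : R := n%:R.
have m1 : 1 <= m by rewrite /m ler1n.
set K : R := 12 * m + 5.
have K0 : 0 < K by rewrite /K; lra.
set dl : R := K^-1.
have dl0 : 0 < dl by rewrite invr_gt0.
have hK : K * dl = 1 by rewrite divff // gt_eqF.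
exists 1, 1, dl; split; first by split => //.
move=> v N1 _ D HD.
rewrite leNgt; apply/negP => hlt.
set x := v 0 0; set y := v 0 1; set u := x^+n * y^+q.
have D0 : D 0 0 = 1 - 3 * (2*n+1)%:R * u^+2 + 2*(3*n+1)%:R * u^+3.
  rewrite -(p0D n q x y (v 0 2)).
  exact: is_partial_uniq (HD 0) (is_partial_poly (@p0E R n q v)).
have D2 : D 0 2 = y.
  rewrite -(p2D n q x y (v 0 2)).
  exact: is_partial_uniq (HD 2) (is_partial_poly (@p2E R n q v)).
set N := vnorm v in N1 hlt *; set G := vnorm (grad_of D) in hlt *.
have G0 : 0 <= G by rewrite /G /vnorm sqrtr_ge0.
have N0 : 0 <= N by lra.
have GD0 : cabs (D 0 0) <= G.
  by have := vnorm_ge (grad_of D) 0; rewrite /grad_of mxE cabs_conj.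
have GD2 : cabs y <= G.
  by have := vnorm_ge (grad_of D) 2; rewrite /grad_of mxE cabs_conj D2.
have Nx : cabs x <= N by exact: vnorm_ge.
have cy : N * cabs y < dl := le_lt_trans (ler_wpM2l N0 GD2) hlt.
have cD : cabs (D 0 0) < dl.
  apply: le_lt_trans GD0 (le_lt_trans _ hlt); rewrite ler_peMl //.
set a := cabs u.
have a0 : 0 <= a := cabs_ge0 u.
have ha : a <= dl.
  have cx0 := cabs_ge0 x; have cy0 := cabs_ge0 y.
  rewrite /a /u cabsM !cabsX.
  apply: (@le_trans _ _ (N ^+ q * cabs y ^+ q)).
    apply: ler_wpM2r; first exact: exprn_ge0.
    apply: (@le_trans _ _ (N ^+ n)); first by apply: lerXn2r; rewrite // nnegrE.
    by rewrite -(subnKC nq) exprD ler_peMr ?exprn_ge0 ?exprn_ege1.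
  rewrite -exprMn; apply: (@le_trans _ _ (dl ^+ q)).
    apply: lerXn2r; rewrite ?nnegrE ?(ltW cy) ?(ltW dl0) //; exact: mulr_ge0 N0 (cabs_ge0 y).
  apply: ler_iXnr => //; first exact: ltW.
  by rewrite invr_le1 ?unitfE ?gt_eqF // /K; lra.
have h1 : 1 <= cabs (D 0 0) + 3 * (2 * m + 1) * a^+2 + 2 * (3 * m + 1) * a^+3.
  have e : (1:C) = (D 0 0 + 3 * (2*n+1)%:R * u^+2) + - (2*(3*n+1)%:R * u^+3).
    by rewrite D0; ring.
  have c1 : cabs (1 : C) = 1 by rewrite (cabs_nat 1).
  have cA : cabs (3 * (2*n+1)%:R * u^+2) = 3 * (2 * m + 1) * a^+2.
    by rewrite cabsM cabsX cabsM (cabs_nat 3) cabs_nat natrD natrM.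
  have cB : cabs (2 * (3*n+1)%:R * u^+3) = 2 * (3 * m + 1) * a^+3.
    by rewrite cabsM cabsX cabsM (cabs_nat 2) cabs_nat natrD natrM.
  rewrite -{1}c1 e; apply: le_trans (cabsD _ _) _; rewrite cabsN cB lerD2r.
  by apply: le_trans (cabsD _ _) _; rewrite cA.
have a2 : a ^+ 2 <= dl ^+ 2 by apply: lerXn2r; rewrite ?nnegrE ?(ltW dl0).
have a3 : a ^+ 3 <= a ^+ 2.
  by rewrite exprS ler_piMl ?exprn_ge0 //; apply: le_trans ha _; rewrite invr_le1 ?unitfE ?gt_eqF // /K; lra.
have d17 : dl * 17 <= 1.
  have : dl * 17 <= dl * K by rewrite ler_pM2l // /K; lra.
  by rewrite [dl * K]mulrC hK.
have pA : 0 <= 3 * (2 * m + 1) by lra.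
have pB : 0 <= 2 * (3 * m + 1) by lra.
have b1 : 3 * (2 * m + 1) * a^+2 <= 3 * (2 * m + 1) * dl^+2 by rewrite ler_wpM2l.
have b2 : 2 * (3 * m + 1) * a^+3 <= 2 * (3 * m + 1) * dl^+2.
  by rewrite ler_wpM2l // (le_trans a3 a2).
have b3 : 3 * (2 * m + 1) * dl^+2 + 2 * (3 * m + 1) * dl^+2 = dl.
  by rewrite -mulrDl expr2 mulrA (_ : 3 * (2 * m + 1) + 2 * (3 * m + 1) = K) ?hK ?mul1r // /K; ring.
lra.
Qed.

End M.

End Helpers.

Theorem proposition1p8 (R : realType) (n q : nat) :
  (0 < n)%N -> (0 < q)%N ->
  ((forall t0 : R[i], Malgrange (@f_nq R n q) t0) <-> (n <= q)%N).
Proof.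
move=> n0 q0; split.
  move=> H; rewrite leqNgt; apply/negP => qn.
  exact: (Helpers.forward n0 q0 qn (H 0)).
by move=> nq; exact: Helpers.backward.
Qed.
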